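(* Let \(\mathcal{I}\) be an instance of 3-SAT and let \(G(\mathcal{I})\), \(T(\mathcal{I})\) be as constructed below. If \(\mathcal{I}\) has a satisfying assignment, then \(T(\mathcal{I})\) is the \(\mathcal{F}\)-tree of some MCS ordering of \(G(\mathcal{I})\), and therefore also the \(\mathcal{F}\)-tree of some MNS ordering of \(G(\mathcal{I})\).
   Context: Let \(\mathcal{I}\) have variables \(x_1,\dots,x_k\) and clauses \(C_1,\dots,C_l\), each a disjunction of three literals. \(G(\mathcal{I})\) has vertices: literal vertices \(X=\{x_1,\dots,x_k,\overline{x_1},\dots,\overline{x_k}\}\), clause vertices \(c_1,\dots,c_l\), and six vertices \(r,p,q,a,b,t\). Edges: any two vertices of \(X\) are adjacent except the pairs \(x_j\overline{x_j}\); the clause vertices are pairwise nonadjacent; \(c_i\) is adjacent to every vertex of \(X\) except the three literal vertices of the literals of \(C_i\); each of \(r,p,q,a\) is adjacent to all literal vertices and all clause vertices; \(b\) is adjacent to all literal vertices; additionally the edges \(ab,ap,aq,bq,br,bt,pr,qr,qt\); no other edges. \(T(\mathcal{I})\) is the spanning tree consisting of all edges of \(G(\mathcal{I})\) incident to \(r\) together with the edges \(pa\) and \(bt\). With \(n\) the number of vertices: an MCS ordering is produced by repeatedly choosing an unnumbered vertex with the largest number of numbered neighbors; an MNS ordering uses set labels (all \(\emptyset\), start vertex gets \(\{n+1\}\); repeatedly pick an unnumbered vertex with inclusion-maximal label as \(v_j\) and add \(j\) to the labels of its unnumbered neighbors); ties are arbitrary. The \(\mathcal{F}\)-tree of an ordering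 \((v_1,\dots,v_n)\) has, for each \(v\ne v_1\), an edge from \(v\) to its leftmost neighbor in the ordering. *)

(* Defs.v *)
From mathcomp Require Import all_boot.
Set Implicit Arguments. Unset Strict Implicit. Unset Printing Implicit Defensive.

(* A literal over variables x_0..x_{k-1}: (j, true) = x_j, (j, false) = ~x_j. *)
Definition literal (k : nat) := ('I_k * bool)%type.
Definition instance (k l : nat) := 'I_l -> 3.-tuple (literal k).

Definition lit_true k (f : 'I_k -> bool) (x : literal k) : bool := f x.1 == x.2.

Definition satisfiable k l (I : instance k l) : Prop :=
  exists f : 'I_k -> bool, forall i : 'I_l, has (lit_true f) (I i).

(* vertices: literal vertices, clause vertices, and six special vertices
   indexed 0..5 = r, p, q, a, b, t *)
Definition vert (k l : nat) := ((literal k + 'I_l) + 'I_6)%type.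

Definition vr {k l} : vert k l := inr (@Ordinal 6 0 isT).
Definition vp {k l} : vert k l := inr (@Ordinal 6 1 isT).
Definition vq {k l} : vert k l := inr (@Ordinal 6 2 isT).
Definition va {k l} : vert k l := inr (@Ordinal 6 3 isT).
Definition vb {k l} : vert k l := inr (@Ordinal 6 4 isT).
Definition vt {k l} : vert k l := inr (@Ordinal 6 5 isT).

(* edges among special vertices: ab, ap, aq, bq, br, bt, pr, qr, qt *)
Definition special_edges : seq (nat * nat) :=
  [:: (3,4); (3,1); (3,2); (4,2); (4,0); (4,5); (1,0); (2,0); (2,5)].

Definition special_adj (s1 s2 : 'I_6) : bool :=
  ((nat_of_ord s1, nat_of_ord s2) \in special_edges) ||
  ((nat_of_ord s2, nat_of_ord s1) \in special_edges).

Definition adj0 k l (I : instance k l) (u v : vert k l) : bool :=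
  match u, v with
  | inl (inl x), inl (inl y) =>
      (x != y) && ~~ ((x.1 == y.1) && (x.2 != y.2))
  | inl (inr i), inl (inl x) => x \notin (I i : seq (literal k))
  | inl (inr _), inl (inr _) => false
  | inr s, inl (inl _) => nat_of_ord s \in [:: 0; 1; 2; 3; 4]  (* r,p,q,a,b *)
  | inr s, inl (inr _) => nat_of_ord s \in [:: 0; 1; 2; 3]     (* r,p,q,a *)
  | inr s1, inr s2 => special_adj s1 s2
  | _, _ => false
  end.

Definition G_adj k l (I : instance k l) : rel (vert k l) :=
  fun u v => adj0 I u v || adj0 I v u.

Definition T_edges k l (I : instance k l) : {set {set vert k l}} :=
  [set [set vr; v] | v in [pred v | G_adj I vr v]]
  :|: [set [set vp; va]; [set vb; vt]].

Definition is_ordering (V : finType) (s : seq V) : bool := perm_eq s (enum V).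

Definition is_MCS_ordering (V : finType) (e : rel V) (s : seq V) : Prop :=
  is_ordering s /\
  forall (j : nat) (w : V), j < size s -> w \notin take j s ->
    count (e w) (take j s) <= count (e (nth w s j)) (take j s).

(* MNS label of a vertex w after j vertices have been numbered: the set of
   positions i < j whose vertex is adjacent to w (position i, 0-based, stands
   for the number i+1 of the paper; the extra label n+1 of the start vertex
   only matters before the first step, where it forces v_1 to be the start
   vertex, which may be any vertex). *)
Definition mns_label (V : finType) (e : rel V) (s : seq V) (j : nat) (w : V)
  : {set 'I_#|V|} :=
  [set i : 'I_#|V| | (i < j) && e (nth w s i) w].

Definition is_MNS_ordering (V : finType) (e : rel V) (s : seq V) : Prop :=
  is_ordering s /\
  forall (j : nat) (w : V), j < size s -> w \notin take j s ->
    ~~ (mns_label e s j (nth w s j) \proper mns_label e s j w).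

Definition leftmost_nb (V : finType) (e : rel V) (s : seq V) (v : V) : V :=
  nth v s (find (e v) s).

Definition F_tree (V : finType) (e : rel V) (s : seq V) : {set {set V}} :=
  [set [set v; leftmost_nb e s v] | v in [pred v | (v \in s) && (v != head v s)]].

(* Main.v *)
Require Import Defs.
From mathcomp Require Import all_boot.
From mathcomp Require Import zify.
Set Implicit Arguments. Unset Strict Implicit. Unset Printing Implicit Defensive.

Definition tlit k l (f : 'I_k -> bool) (j : 'I_k) : vert k l := inl (inl (j, f j)).
Definition flit k l (f : 'I_k -> bool) (j : 'I_k) : vert k l := inl (inl (j, ~~ f j)).
Definition cv k l (c : 'I_l) : vert k l := inl (inr c).
Definition TL k l (f : 'I_k -> bool) : seq (vert k l) := map (tlit l f) (enum 'I_k).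
Definition FL k l (f : 'I_k -> bool) : seq (vert k l) := map (flit l f) (enum 'I_k).
Arguments TL : simpl never.
Arguments FL : simpl never.
Definition Q0 k l (f : 'I_k -> bool) : seq (vert k l) :=
  [:: vr; vp] ++ TL l f ++ [:: vb; vq; va] ++ FL l f.
Definition Kc k l (I : instance k l) f (c : 'I_l) := count (G_adj I (cv k c)) (Q0 l f).
Definition Cs k l (I : instance k l) f := sort (fun c d => Kc I f d <= Kc I f c) (enum 'I_l).
Arguments Q0 : simpl never.
Definition CL k l (I : instance k l) f : seq (vert k l) := map (@cv k l) (Cs I f).
Arguments CL : simpl never.
Arguments Q0 : simpl never.
Definition sq k l (I : instance k l) f : seq (vert k l) :=
  Q0 l f ++ CL I f ++ [:: vt].
Definition rk k l (I : instance k l) f (x : vert k l) : nat :=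
  match x with
  | inl (inl (j, bb)) => if bb == f j then 2 + j else 5 + k + j
  | inl (inr c) => 5 + 2*k + index c (Cs I f)
  | inr s => nth 0 [:: 0; 1; 3+k; 4+k; 2+k; 5+2*k+l] s
  end.

Lemma tlit_inj k l (f : 'I_k -> bool) : injective (@tlit k l f).
Proof. by move=> i j [->]. Qed.
Lemma flit_inj k l (f : 'I_k -> bool) : injective (@flit k l f).
Proof. by move=> i j [->]. Qed.
Lemma cv_inj k l : injective (@cv k l).
Proof. by move=> i j [->]. Qed.

Lemma size_Cs k l (I : instance k l) (f : 'I_k -> bool) : size (Cs I f) = l.
Proof. by rewrite size_sort size_enum_ord. Qed.
Lemma size_CL k l (I : instance k l) (f : 'I_k -> bool) : size (CL I f) = l.
Proof. by rewrite size_map size_Cs. Qed.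
Lemma size_TL k l (f : 'I_k -> bool) : size (TL l f) = k.
Proof. by rewrite size_map size_enum_ord. Qed.
Lemma size_FL k l (f : 'I_k -> bool) : size (FL l f) = k.
Proof. by rewrite size_map size_enum_ord. Qed.

Lemma mem_Cs k l (I : instance k l) (f : 'I_k -> bool) c : c \in Cs I f.
Proof. by rewrite mem_sort mem_enum. Qed.

Lemma mem_TL k l (f : 'I_k -> bool) (x : vert k l) :
  (x \in TL l f) = (if x is inl (inl (j, bb)) then (bb == f j) else false).
Proof.
apply/mapP; case: x => [[[j bb]|c]|s'] /=.
- case: eqP => [->|H]; first by exists j; rewrite ?mem_enum.
  by case=> i si [eq1 eq2]; apply: H; rewrite eq1 eq2.
- by case.
- by case.
Qed.

Lemma mem_FL k l (f : 'I_k -> bool) (x : vert k l) :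
  (x \in FL l f) = (if x is inl (inl (j, bb)) then (bb == ~~ f j) else false).
Proof.
apply/mapP; case: x => [[[j bb]|c]|s'] /=.
- case: eqP => [->|H]; first by exists j; rewrite ?mem_enum.
  by case=> i si [eq1 eq2]; apply: H; rewrite eq1 eq2.
- by case.
- by case.
Qed.

Lemma mem_CL k l (I : instance k l) (f : 'I_k -> bool) (x : vert k l) :
  (x \in CL I f) = (if x is inl (inr c) then true else false).
Proof.
apply/mapP; case: x => [[[j bb]|c]|s'] /=.
- by case.
- by exists c; rewrite ?mem_Cs.
- by case.
Qed.

Lemma index_TL k l (f : 'I_k -> bool) j : index (inl (inl (j, f j))) (TL l f) = j :> nat.
Proof. by rewrite -/(tlit l f j) index_map ?index_enum_ord //; apply: tlit_inj. Qed.
Lemma index_FL k l (f : 'I_k -> bool) j : index (inl (inl (j, ~~ f j))) (FL l f) = j :> nat.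
Proof. by rewrite -/(flit l f j) index_map ?index_enum_ord //; apply: flit_inj. Qed.
Lemma index_CL k l (I : instance k l) (f : 'I_k -> bool) c : index (inl (inr c)) (CL I f) = index c (Cs I f).
Proof. by rewrite -/(cv k c) index_map //; apply: cv_inj. Qed.

Lemma index_sq k l (I : instance k l) (f : 'I_k -> bool) x : index x (sq I f) = rk I f x.
Proof.
rewrite /sq /Q0 -!catA.
case: x => [[[j bb]|c]|s].
- do 4 rewrite /= ?index_cat ?mem_TL ?mem_FL ?mem_CL /=.
  case: eqP => [->|ne]; first by rewrite index_TL.
  have e : bb = ~~ f j by case: bb ne; case: (f j).
  rewrite e eqxx /= index_FL size_TL; lia.
- do 4 rewrite /= ?index_cat ?mem_TL ?mem_FL ?mem_CL /=.
  rewrite index_CL size_TL size_FL; lia.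
- case: s => [[|[|[|[|[|[|?]]]]]] ?] //=;
  do 4 rewrite /= ?index_cat ?mem_TL ?mem_FL ?mem_CL /=;
  rewrite ?size_TL ?size_FL ?size_CL; try lia.
Qed.

Lemma count0 (T : eqType) (a : pred T) (s : seq T) :
  (forall x, x \in s -> ~~ a x) -> count a s = 0.
Proof. by move=> H; apply/eqP; rewrite eqn0Ngt -has_count; apply/hasPn. Qed.

Lemma crit_all (T : eqType) (e : rel T) (P : seq T) v w :
  (forall x, x \in P -> e v x) -> count (e w) P <= count (e v) P.
Proof.
move=> H; have -> : count (e v) P = size P by apply/eqP; rewrite -all_count; apply/allP.
exact: count_size.
Qed.

Lemma crit_one (T : eqType) (e : rel T) (P : seq T) v w y :
  uniq P -> (forall x, x \in P -> ~~ e v x -> x = y) ->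
  (exists x, (x \in P) && ~~ e w x) -> count (e w) P <= count (e v) P.
Proof.
move=> uP Hv [x /andP [xP nx]].
have h1 := count_predC (e w) P.
have h2 := count_predC (e v) P.
have h3 : 0 < count (predC (e w)) P by rewrite -has_count; apply/hasP; exists x.
have h4 : count (predC (e v)) P <= count (pred1 y) P.
  have -> : count (predC (e v)) P = count (fun z => (z == y) && ~~ e v z) P.
    apply: eq_in_count => z zP /=.
    by case: (boolP (e v z)) => [_|nz] /=; [rewrite andbF | rewrite (Hv z zP nz) eqxx].
  by apply: sub_count => z /andP [].
have h5 : count (pred1 y) P <= 1 by rewrite count_uniq_mem //; case: (y \in P).
lia.
Qed.

Lemma MCS_of (V : finType) (e : rel V) s :
  uniq s -> (forall x, x \in s) ->
  (forall v w, index v s < index w s ->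
     count (e w) (take (index v s) s) <= count (e v) (take (index v s) s)) ->
  is_MCS_ordering e s.
Proof.
move=> us alls H; split.
  by apply: uniq_perm => //; [exact: enum_uniq | move=> x; rewrite alls mem_enum].
move=> j w js wn.
have iv : index (nth w s j) s = j by rewrite index_uniq.
have : j <= index w s by rewrite leqNgt -in_take ?alls.
rewrite leq_eqVlt => /orP [/eqP ej | lt].
  by rewrite ej nth_index ?alls.
by rewrite -{1 3}iv; apply: H; rewrite iv.
Qed.

Lemma card_label (V : finType) (e : rel V) s j u :
  uniq s -> size s = #|V| -> j <= size s -> symmetric e ->
  #|mns_label e s j u| = count (e u) (take j s).
Proof.
move=> us ss js se.
rewrite /mns_label.
set A := [set _ | _].
have inj : {in A &, injective (fun i : 'I_#|V| => nth u s i)}.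
  move=> i i'; rewrite !inE => /andP [ij _] /andP [ij' _] eqn.
  apply/val_inj/eqP; rewrite -(nth_uniq u _ _ us); first by rewrite eqn.
  - exact: leq_trans ij js.
  - exact: leq_trans ij' js.
rewrite -(card_in_imset inj).
have -> : [set nth u s (nat_of_ord i) | i in A] = [set x | (x \in take j s) && e u x].
  apply/setP => x; rewrite inE; apply/imsetP/andP.
  - case=> i; rewrite inE => /andP [ij ei] ->; split; last by rewrite se.
    have sz : size (take j s) = j by rewrite size_take; case: ltngtP js => //; lia.
    by rewrite -(nth_take _ ij) //; apply: mem_nth; rewrite sz.
  - case=> xin ex.
    have xs : x \in s by apply: mem_take xin.
    have ix : index x s < #|V| by rewrite -ss index_mem.
    exists (Ordinal ix); last by rewrite /= nth_index.
    by rewrite inE /= (index_ltn xin) /= nth_index // se.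
rewrite cardsE.
have -> : #|[pred x | (x \in take j s) && e u x]| = #|filter (e u) (take j s)|.
  by apply: eq_card => x; rewrite /= mem_filter andbC.
by rewrite (card_uniqP _) ?size_filter // filter_uniq // take_uniq.
Qed.

Lemma MNS_of (V : finType) (e : rel V) s :
  uniq s -> (forall x, x \in s) -> symmetric e ->
  is_MCS_ordering e s -> is_MNS_ordering e s.
Proof.
move=> us alls se [po H]; split => // j w js wn.
have ss : size s = #|V|.
  rewrite -(card_uniqP us); apply: eq_card => x; by rewrite alls.
apply/negP => /proper_card.
rewrite !(@card_label V e s j) // ?(ltnW js) //.
by move=> lt; move: (H j w js wn); rewrite leqNgt lt.
Qed.

Lemma adjLL k l (I : instance k l) (x y : literal k) :
  G_adj I (inl (inl x)) (inl (inl y)) = (x != y) && ~~ ((x.1 == y.1) && (x.2 != y.2)).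
Proof. by rewrite /G_adj /= (eq_sym y) (eq_sym y.1) (eq_sym y.2) orbb. Qed.

Lemma adjCL k l (I : instance k l) c (x : literal k) :
  G_adj I (inl (inr c)) (inl (inl x)) = (x \notin (I c : seq _)).
Proof. by rewrite /G_adj /= orbF. Qed.
Lemma adjLC k l (I : instance k l) c (x : literal k) :
  G_adj I (inl (inl x)) (inl (inr c)) = (x \notin (I c : seq _)).
Proof. by rewrite /G_adj /=. Qed.
Lemma adjCC k l (I : instance k l) c d :
  G_adj I (inl (inr c)) (inl (inr d)) = false.
Proof. by []. Qed.
Lemma adjSL k l (I : instance k l) (s : 'I_6) (x : literal k) :
  G_adj I (inr s) (inl (inl x)) = (nat_of_ord s \in [:: 0; 1; 2; 3; 4]).
Proof. by rewrite /G_adj /= orbF. Qed.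
Lemma adjLS k l (I : instance k l) (s : 'I_6) (x : literal k) :
  G_adj I (inl (inl x)) (inr s) = (nat_of_ord s \in [:: 0; 1; 2; 3; 4]).
Proof. by rewrite /G_adj /=. Qed.
Lemma adjSC k l (I : instance k l) (s : 'I_6) c :
  G_adj I (inr s) (inl (inr c)) = (nat_of_ord s \in [:: 0; 1; 2; 3]).
Proof. by rewrite /G_adj /= orbF. Qed.
Lemma adjCS k l (I : instance k l) (s : 'I_6) c :
  G_adj I (inl (inr c)) (inr s) = (nat_of_ord s \in [:: 0; 1; 2; 3]).
Proof. by rewrite /G_adj /=. Qed.
Lemma adj_sym k l (I : instance k l) : symmetric (G_adj I).
Proof. by move=> x y; rewrite /G_adj orbC. Qed.

Lemma test k l (I : instance k l) : G_adj I vq vb /\ ~~ G_adj I vq vp.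
Proof. by []. Qed.

Lemma mem_sq k l (I : instance k l) (f : 'I_k -> bool) x : x \in sq I f.
Proof.
rewrite /sq /Q0 !mem_cat mem_TL mem_FL mem_CL.
case: x => [[[j bb]|c]|s] /=.
- by case: bb; case: (f j); rewrite ?orbT.
- by [].
- by case: s => [[|[|[|[|[|[|?]]]]]] ?].
Qed.

Lemma uniq_sq k l (I : instance k l) (f : 'I_k -> bool) : uniq (sq I f).
Proof.
apply/card_uniqP.
have -> : #|sq I f| = #|{: (literal k + 'I_l) + 'I_6}| by apply: eq_card => x; rewrite mem_sq.
rewrite /sq /Q0 !size_cat size_TL size_FL size_CL /=.
rewrite !card_sum card_prod card_bool !card_ord; lia.
Qed.

Lemma memP k l (I : instance k l) (f : 'I_k -> bool) v x :
  (x \in take (rk I f v) (sq I f)) = (rk I f x < rk I f v).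
Proof. by rewrite in_take ?mem_sq // index_sq. Qed.

Lemma rk_lt k l (I : instance k l) (f : 'I_k -> bool) x : rk I f x < 6 + 2 * k + l.
Proof.
have := index_mem x (sq I f); rewrite mem_sq index_sq /sq /Q0 !size_cat size_TL size_FL size_CL /=.
move=> h; lia.
Qed.

Lemma Wit k l (I : instance k l) (f : 'I_k -> bool) :
  (forall i, has (lit_true f) (I i)) ->
  forall w, 2 + k < rk I f w -> exists x, (rk I f x < 2 + k) && ~~ G_adj I w x.
Proof.
move=> sat w.
case: w => [[[j bb]|c]|s] /=.
- case: eqP => [_|ne]; first by have := ltn_ord j; lia.
  move=> _; exists (inl (inl (j, f j))); rewrite /= eqxx /= ltn_add2l ltn_ord /= adjLL /= eqxx /=.
  have -> : bb != f j by apply/eqP.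
  by rewrite andbF.
- move=> _; have /hasP [x xin xt] := sat c.
  exists (inl (inl x)); rewrite adjCL xin andbT /=.
  case: x xin xt => j bb /= _; rewrite /lit_true /= => /eqP ->; rewrite eqxx.
  by have := ltn_ord j; lia.
- case: s => [[|[|[|[|[|[|?]]]]]] ?] //=; try lia.
  + by move=> _; exists vp.
  + by move=> _; exists vr.
  + by move=> _; exists vr.
Qed.

Lemma key_all k l (I : instance k l) (f : 'I_k -> bool) v w :
  (forall x, rk I f x < rk I f v -> G_adj I v x) ->
  count (G_adj I w) (take (rk I f v) (sq I f)) <= count (G_adj I v) (take (rk I f v) (sq I f)).
Proof. by move=> H; apply: crit_all => x; rewrite memP; apply: H. Qed.

Lemma key_one k l (I : instance k l) (f : 'I_k -> bool) v w y :
  (forall i, has (lit_true f) (I i)) ->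
  2 + k <= rk I f v -> rk I f v < rk I f w ->
  (forall x, rk I f x < rk I f v -> ~~ G_adj I v x -> x = y) ->
  count (G_adj I w) (take (rk I f v) (sq I f)) <= count (G_adj I v) (take (rk I f v) (sq I f)).
Proof.
move=> sat lv lw H; apply: (crit_one (y := y)).
- by rewrite take_uniq // uniq_sq.
- by move=> x; rewrite memP; apply: H.
- have [|x /andP [x1 x2]] := Wit sat (w := w); first by lia.
  by exists x; rewrite memP x2 andbT; lia.
Qed.

Lemma TL_lit k l (f : 'I_k -> bool) x : x \in TL l f -> exists y, x = inl (inl y).
Proof. by rewrite mem_TL; case: x => [[y|c]|s] //; exists y. Qed.
Lemma FL_lit k l (f : 'I_k -> bool) x : x \in FL l f -> exists y, x = inl (inl y).
Proof. by rewrite mem_FL; case: x => [[y|c]|s] //; exists y. Qed.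
Lemma CL_cl k l (I : instance k l) (f : 'I_k -> bool) x : x \in CL I f -> exists c, x = inl (inr c).
Proof. by rewrite mem_CL; case: x => [[y|c]|s] //; exists c. Qed.

Lemma size_Q0 k l (f : 'I_k -> bool) : size (Q0 l f) = 5 + 2 * k.
Proof. rewrite /Q0 !size_cat size_TL size_FL /=; lia. Qed.

Lemma key_clause k l (I : instance k l) (f : 'I_k -> bool) c w :
  rk I f (inl (inr c)) < rk I f w ->
  count (G_adj I w) (take (rk I f (inl (inr c))) (sq I f)) <=
  count (G_adj I (inl (inr c))) (take (rk I f (inl (inr c))) (sq I f)).
Proof.
move=> lw.
have ic : index c (Cs I f) < l by have := index_mem c (Cs I f); rewrite mem_Cs size_Cs.
have -> : take (rk I f (inl (inr c))) (sq I f) = Q0 l f ++ take (index c (Cs I f)) (CL I f).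
  rewrite /sq take_cat size_Q0 ltnNge leq_addr /=.
  have -> : 5 + 2 * k + index c (Cs I f) - (5 + 2 * k) = index c (Cs I f) by lia.
  by rewrite take_cat size_CL ic.
have z : forall u, (exists d, u = inl (inr d)) \/ u = vt ->
    count (G_adj I u) (take (index c (Cs I f)) (CL I f)) = 0.
  move=> u hu; apply: count0 => x /mem_take /CL_cl [d ->].
  by case: hu => [[d' ->]|->].
rewrite !(count_cat _ (Q0 l f)) (z (inl (inr c))); last by left; exists c.
case: w lw => [[[j bb]|d]|s] lw; rewrite /= in lw.
- by move: lw; case: eqP; have := ltn_ord j; lia.
- rewrite z; last by left; exists d.
  rewrite !addn0.
  have tr : transitive (fun c d : 'I_l => Kc I f d <= Kc I f c).
    by move=> a b e h1 h2; exact: leq_trans h2 h1.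
  have so : sorted (fun c d : 'I_l => Kc I f d <= Kc I f c) (Cs I f).
    by apply: sort_sorted => a b; apply: leq_total.
  apply: (sorted_ltn_index tr so c d (mem_Cs I f c) (mem_Cs I f d)); lia.
- move: lw; case: s => [[|[|[|[|[|[|?]]]]]] ?] //=; try lia.
  move=> _.
  rewrite z; last by right; congr inr; apply: val_inj.
  rewrite count_cat (count0 (s:=TL l f)); last by move=> x /TL_lit [y ->]; rewrite adjSL.
  rewrite /= (count0 (s:=FL l f)); last by move=> x /FL_lit [y ->]; rewrite adjSL.
  by rewrite /=; lia.
Qed.

Ltac sp_cases := case => [[|[|[|[|[|[|?]]]]]] ?] //=; try lia; try (by move=> *; congr inr; apply: val_inj).

Lemma key k l (I : instance k l) (f : 'I_k -> bool) v w :
  (forall i, has (lit_true f) (I i)) ->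
  rk I f v < rk I f w ->
  count (G_adj I w) (take (rk I f v) (sq I f)) <= count (G_adj I v) (take (rk I f v) (sq I f)).
Proof.
move=> sat lw.
case: v lw => [[[j bb]|c]|s] lw.
- have jk := ltn_ord j.
  case E: (bb == f j).
  + apply: key_all => x; rewrite /= E.
    case: x => [[[j' bb']|c]|s'] /=.
    * case E': (bb' == f j') => lt; last by have := ltn_ord j; lia.
      have ne : (j == j') = false by apply/eqP => h; move: lt; rewrite h; lia.
      by rewrite adjLL /= xpair_eqE ne.
    * by have := ltn_ord j; lia.
    * move: s'; sp_cases.
  + have e2 : bb = ~~ f j by apply/eqP; move: E; case: (f j); case: (bb).
    apply: (key_one (y := inl (inl (j, f j)))) => //; rewrite /= ?E.
    * by lia.
    * move=> x; case: x => [[[j' bb']|c]|s'] /=.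
      - case: (j =P j') => [<-|ne].
          move: E; rewrite e2; case: (f j); case: bb' => //= _; lia.
        rewrite adjLL /= xpair_eqE.
        by have -> : (j == j') = false by apply/eqP.
      - by have := ltn_ord j; lia.
      - move: s'; sp_cases.
- exact: key_clause lw.
- move: s lw; case => [[|[|[|[|[|[|?]]]]]] ?] // lw.
  + apply: key_all => x; case: x => [[[j' bb']|c]|s'] /=.
    * by case: (_ == _); lia.
    * by lia.
    * move: s'; sp_cases.
  + apply: (key_one (y := vp)) => //; try by rewrite /=; lia.
    move=> x; case: x => [[[j' bb']|c]|s'] /=.
    * by case: (_ == _).
    * by lia.
    * move: s'; sp_cases.
  + apply: (key_one (y := vr)) => //; try by rewrite /=; lia.
    move=> x; case: x => [[[j' bb']|c]|s'] /=.
    * by case: (_ == _).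
    * by lia.
    * move: s'; sp_cases.
  + apply: (key_one (y := vp)) => //; try by rewrite /=; lia.
    move=> x; case: x => [[[j' bb']|c]|s'] /=.
    * by case: (_ == _); have := ltn_ord j'; lia.
    * by lia.
    * move: s'; sp_cases.
  + by have := rk_lt I f w; move: lw; rewrite /=; lia.
Qed.

Lemma lm_r k l (I : instance k l) (f : 'I_k -> bool) v :
  G_adj I v vr -> leftmost_nb (G_adj I) (sq I f) v = vr.
Proof. by move=> H; rewrite /leftmost_nb /sq /Q0 /= H. Qed.

Lemma lm_a k l (I : instance k l) (f : 'I_k -> bool) :
  leftmost_nb (G_adj I) (sq I f) va = vp.
Proof. by rewrite /leftmost_nb /sq /Q0 /=. Qed.

Lemma lm_t k l (I : instance k l) (f : 'I_k -> bool) :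
  leftmost_nb (G_adj I) (sq I f) vt = vb.
Proof.
have -> : sq I f = rcons ([:: vr; vp] ++ TL l f) vb ++ ([:: vq; va] ++ FL l f ++ CL I f ++ [:: vt]).
  by rewrite /sq /Q0 -cats1 -!catA.
apply: nth_rcons_cat_find => //.
rewrite has_cat /=; apply/hasPn => x /TL_lit [y ->]; by rewrite adjSL.
Qed.

Lemma classify k l (I : instance k l) (v : vert k l) :
  v != vr -> ~~ G_adj I v vr -> v = va \/ v = vt.
Proof.
case: v => [[x|c]|s]; rewrite ?adjLS ?adjCS //.
case: s => [[|[|[|[|[|[|?]]]]]] ?] //= _ _.
- by left; congr inr; apply: val_inj.
- by right; congr inr; apply: val_inj.
Qed.

Lemma Ftree k l (I : instance k l) (f : 'I_k -> bool) :
  F_tree (G_adj I) (sq I f) = T_edges I.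
Proof.
have hd : forall x, head x (sq I f) = vr by [].
apply/eqP; rewrite eqEsubset; apply/andP; split; apply/subsetP => E.
- case/imsetP => v /andP [_ nv] ->; rewrite hd in nv.
  rewrite /T_edges in_setU.
  case: (boolP (G_adj I v vr)) => [adj|nadj].
  + rewrite lm_r //; apply/orP; left; apply/imsetP; exists v; first by rewrite inE adj_sym.
    by rewrite setUC.
  + case: (classify nv nadj) => ->; apply/orP; right; rewrite in_set2.
    * by rewrite lm_a setUC eqxx.
    * by rewrite lm_t setUC eqxx orbT.
- rewrite /T_edges in_setU => /orP [/imsetP [v]|].
  + rewrite inE => adj ->; apply/imsetP; exists v.
    * rewrite inE mem_sq hd /=; apply: contraTneq adj => ->.
      by [].
    * rewrite lm_r; first by rewrite setUC.
      by rewrite adj_sym.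
  + rewrite in_set2 => /orP [/eqP ->|/eqP ->]; apply/imsetP.
    * exists va; first by rewrite inE mem_sq hd.
      by rewrite lm_a setUC.
    * exists vt; first by rewrite inE mem_sq hd.
      by rewrite lm_t setUC.
Qed.

Theorem lemma11 (k l : nat) (I : instance k l) :
  satisfiable I ->
  (exists s : seq (vert k l),
      is_MCS_ordering (G_adj I) s /\ F_tree (G_adj I) s = T_edges I) /\
  (exists s : seq (vert k l),
      is_MNS_ordering (G_adj I) s /\ F_tree (G_adj I) s = T_edges I).
Proof.
case=> f sat.
have mcs : is_MCS_ordering (G_adj I) (sq I f).
  apply: MCS_of; [exact: uniq_sq | exact: mem_sq |].
  by move=> v w; rewrite !index_sq => lt; exact: key sat lt.
split; exists (sq I f); split => //; try exact: Ftree.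
apply: MNS_of => //; [exact: uniq_sq | exact: mem_sq | exact: adj_sym].
Qed.
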